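(* Let $S$ be a dense subsemigroup of $((0,\infty),+)$, let $(X,\langle T_s\rangle_{s\in S})$ be a dynamical system and let $x,y\in X$. There is an idempotent $u\in K(O^{+}(S))$ such that $T_u(x)=y$ if and only if $y$ is uniformly recurrent near zero and $x$ and $y$ are proximal near zero.
   Context: ''Dense'' means dense in the usual topology of $(0,\infty)$. $\beta S$ is the Stone–Čech compactification of the discrete set $S$ (ultrafilters on $S$), with $+$ extended so that $(\beta S,+)$ is a compact right topological semigroup: $A\in p+q$ iff $\{x\in S:-x+A\in q\}\in p$, where $-x+A=\{y\in S:x+y\in A\}$. $O^{+}(S)=\{p\in\beta S: S\cap(0,\epsilon)\in p\text{ for every }\epsilon>0\}$, a compact right topological subsemigroup of $\beta S$; $K(O^{+}(S))$ denotes its smallest two-sided ideal. A dynamical system $(X,\langle T_s\rangle_{s\in S})$ consists of a compact Hausdorff space $X$ and continuous maps $T_s:X\to X$ with $T_s\circ T_t=T_{s+t}$. For $p\in\beta S$, $T_p(x)=p\text{-}\lim_{s\in S}T_s(x)$; $T_p\circ T_q=T_{p+q}$. A subset $B\subseteq S$ is syndetic near zero iff for every $\epsilon>0$ there exist a finite nonempty $F\subseteq (0,\epsilon)\cap S$ and $\delta>0$ with $S\cap(0,\delta)\subseteq\bigcup_{t\in F}(-t+B)$. A point $y$ is uniformly recurrent near zero iff for each neighbourhood $W$ of $y$, $\{s\in S:T_s(y)\in W\}$ is syndetic near zero. Points $x,y$ are proximal near zero iff for every neighbourhood $U$ of the diagonal in $X\times X$ and every $\epsilon>0$ there is $s\in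 S\cap(0,\epsilon)$ with $(T_s(x),T_s(y))\in U$. *)

(* Defs.v *)
From Stdlib Require Import Reals List.
Open Scope R_scope.

Record Subsemigroup := {
  carrier : R -> Prop;
  carrier_pos : forall x, carrier x -> 0 < x;
  carrier_add : forall x y, carrier x -> carrier y -> carrier (x + y)
}.

Definition dense_in_pos (S : Subsemigroup) : Prop :=
  forall a b, 0 < a -> a < b -> exists s, carrier S s /\ a < s /\ s < b.

Definition pt (S : Subsemigroup) : Type := { x : R | carrier S x }.
Definition val {S : Subsemigroup} (s : pt S) : R := proj1_sig s.

Definition ptadd {S : Subsemigroup} (a b : pt S) : pt S :=
  exist _ (val a + val b) (carrier_add S _ _ (proj2_sig a) (proj2_sig b)).

(** * The Stone-Cech compactification beta S: ultrafilters on S *)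
Definition filt (S : Subsemigroup) : Type := (pt S -> Prop) -> Prop.

Definition is_ultrafilter {S : Subsemigroup} (p : filt S) : Prop :=
  p (fun _ => True) /\
  ~ p (fun _ => False) /\
  (forall A B : pt S -> Prop, p A -> (forall s, A s -> B s) -> p B) /\
  (forall A B : pt S -> Prop, p A -> p B -> p (fun s => A s /\ B s)) /\
  (forall A : pt S -> Prop, p A \/ p (fun s => ~ A s)).

Definition shift {S : Subsemigroup} (x : pt S) (A : pt S -> Prop) : pt S -> Prop :=
  fun y => A (ptadd x y).

Definition ufadd {S : Subsemigroup} (p q : filt S) : filt S :=
  fun A => p (fun x => q (shift x A)).

Definition Oplus {S : Subsemigroup} (p : filt S) : Prop :=
  is_ultrafilter p /\ forall eps, 0 < eps -> p (fun s => val s < eps).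

Definition is_ideal_Oplus {S : Subsemigroup} (I : filt S -> Prop) : Prop :=
  (exists p, I p) /\
  (forall p, I p -> Oplus p) /\
  (forall p q, Oplus p -> I q -> I (ufadd p q) /\ I (ufadd q p)).

(** K(O^+(S)), the smallest two-sided ideal of O^+(S), realised as the
    intersection of all two-sided ideals (which is the smallest ideal). *)
Definition in_K_Oplus {S : Subsemigroup} (p : filt S) : Prop :=
  Oplus p /\ forall I, is_ideal_Oplus I -> I p.

Definition idempotent {S : Subsemigroup} (u : filt S) : Prop := ufadd u u = u.

Record topology (X : Type) := {
  open : (X -> Prop) -> Prop;
  open_full : open (fun _ => True);
  open_inter : forall A B, open A -> open B -> open (fun x => A x /\ B x);
  open_union : forall F : (X -> Prop) -> Prop,
      (forall A, F A -> open A) -> open (fun x => exists A, F A /\ A x)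
}.
Arguments open {X} t _.

Definition compact {X : Type} (t : topology X) : Prop :=
  forall F : (X -> Prop) -> Prop,
    (forall A, F A -> open t A) ->
    (forall x, exists A, F A /\ A x) ->
    exists l : list (X -> Prop),
      (forall A, In A l -> F A) /\ (forall x, exists A, In A l /\ A x).

Definition hausdorff {X : Type} (t : topology X) : Prop :=
  forall x y : X, x <> y ->
    exists U V, open t U /\ open t V /\ U x /\ V y /\
                (forall z, U z -> V z -> False).

Definition continuous {X : Type} (t : topology X) (f : X -> X) : Prop :=
  forall A, open t A -> open t (fun x => A (f x)).

Definition prod_open {X : Type} (t : topology X) (U : X * X -> Prop) : Prop :=
  forall z, U z -> exists A B, open t A /\ open t B /\ A (fst z) /\ B (snd z) /\
              (forall a b, A a -> B b -> U (a, b)).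

Definition dynsys {S : Subsemigroup} {X : Type} (t : topology X)
  (T : pt S -> X -> X) : Prop :=
  compact t /\ hausdorff t /\
  (forall s, continuous t (T s)) /\
  (forall s u z, T s (T u z) = T (ptadd s u) z).

Definition plim {S : Subsemigroup} {X : Type} (t : topology X)
  (p : filt S) (f : pt S -> X) (z : X) : Prop :=
  forall W, open t W -> W z -> p (fun s => W (f s)).

Definition Tp_is {S : Subsemigroup} {X : Type} (t : topology X)
  (T : pt S -> X -> X) (p : filt S) (x y : X) : Prop :=
  plim t p (fun s => T s x) y.

Definition syndetic_near_zero {S : Subsemigroup} (B : pt S -> Prop) : Prop :=
  forall eps, 0 < eps ->
    exists (F : list (pt S)) (delta : R),
      F <> nil /\ (forall u, In u F -> val u < eps) /\ 0 < delta /\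
      (forall s : pt S, val s < delta -> exists u, In u F /\ shift u B s).

Definition unif_recurrent_near_zero {S : Subsemigroup} {X : Type}
  (t : topology X) (T : pt S -> X -> X) (y : X) : Prop :=
  forall W, open t W -> W y -> syndetic_near_zero (fun s => W (T s y)).

Definition proximal_near_zero {S : Subsemigroup} {X : Type}
  (t : topology X) (T : pt S -> X -> X) (x y : X) : Prop :=
  forall U : X * X -> Prop, prod_open t U -> (forall z, U (z, z)) ->
    forall eps, 0 < eps ->
      exists s : pt S, val s < eps /\ U (T s x, T s y).

(* Main.v *)
Require Import Defs.
From Stdlib Require Import Reals Lra List Classical FunctionalExtensionality PropExtensionality ProofIrrelevance.
From mathcomp Require filter classical_sets.
Open Scope R_scope.

Section UFL.
Variable (P : Type).
Lemma uf_lemma (G : (P -> Prop) -> Prop) :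
  G (fun _ => True) -> ~ G (fun _ => False) ->
  (forall A B, G A -> (forall s, A s -> B s) -> G B) ->
  (forall A B, G A -> G B -> G (fun s => A s /\ B s)) ->
  exists p : (P -> Prop) -> Prop,
    (p (fun _ => True) /\
  ~ p (fun _ => False) /\
  (forall A B : P -> Prop, p A -> (forall s, A s -> B s) -> p B) /\
  (forall A B : P -> Prop, p A -> p B -> p (fun s => A s /\ B s)) /\
  (forall A : P -> Prop, p A \/ p (fun s => ~ A s))) /\ forall A, G A -> p A.
Proof.
intros HT HF HS HI.
assert (PF : filter.ProperFilter G).
{ constructor. exact HF. constructor. exact HT. intros A B; exact (HI A B).
  intros A B HAB; exact (fun h => HS A B h HAB). }
destruct (filter.ultraFilterLemma PF) as [p [Up Gp]].
exists p; split; [|exact Gp].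
pose proof (filter.in_ultra_setVsetC (F:=p)) as Hv. destruct Up as [[PF1 [T1 I1 S1]] Mx].
split; [exact T1|]. split; [exact PF1|].
split; [intros A B h hAB; exact (S1 A B hAB h)|].
split; [intros A B; exact (I1 A B)|].
intros A. apply Hv. constructor; [constructor; auto; constructor; auto|exact Mx].
Qed.
End UFL.

Section Beta.
Variable S : Subsemigroup.
Notation P := (pt S).
Definition UF (p : filt S) := is_ultrafilter p.

Lemma uf_T {p} : UF p -> p (fun _ => True).
Proof. intros H; apply H. Qed.
Lemma uf_F {p} : UF p -> ~ p (fun _ => False).
Proof. intros H; apply H. Qed.
Lemma uf_mono {p} {A B : P -> Prop} : UF p -> p A -> (forall s, A s -> B s) -> p B.
Proof. intros H; apply H. Qed.
Lemma uf_and {p} {A B : P -> Prop} : UF p -> p A -> p B -> p (fun s => A s /\ B s).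
Proof. intros H; apply H. Qed.
Lemma uf_em {p} (A : P -> Prop) : UF p -> p A \/ p (fun s => ~ A s).
Proof. intros H; apply H. Qed.
Lemma uf_ex {p} {A : P -> Prop} : UF p -> p A -> exists s, A s.
Proof. intros H hA. apply NNPP; intros hn. apply (uf_F H).
  apply (uf_mono H hA). intros s hs; apply hn; eauto. Qed.
Lemma uf_not {p} {A : P -> Prop} : UF p -> p A -> ~ p (fun s => ~ A s).
Proof. intros H hA hn. destruct (uf_ex H (uf_and H hA hn)) as [s [h1 h2]]; auto. Qed.
Lemma uf_notp {p} {A : P -> Prop} : UF p -> ~ p A -> p (fun s => ~ A s).
Proof. intros H hA. destruct (uf_em A H); tauto. Qed.
Lemma uf_list {Y : Type} {p} (l : list Y) (Q : Y -> P -> Prop) : UF p ->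
  p (fun s => exists a, In a l /\ Q a s) -> exists a, In a l /\ p (Q a).
Proof.
  intros H. induction l as [|a l IH]; intros hp.
  - exfalso. apply (uf_F H). apply (uf_mono H hp). intros s [a [[] _]].
  - destruct (uf_em (Q a) H) as [h|h]. exists a; split; [left; auto|auto].
    destruct IH as [b [hb hq]].
    + apply (uf_mono H (uf_and H hp h)). intros s [[b [[<-|hb] hq]] hn]; [tauto|eauto].
    + exists b; split; [right|]; auto.
Qed.

Lemma pt_eq (a b : P) : val a = val b -> a = b.
Proof. destruct a as [a ha], b as [b hb]; simpl; intros ->. f_equal; apply proof_irrelevance. Qed.
Lemma ptadd_assoc (a b c : P) : ptadd a (ptadd b c) = ptadd (ptadd a b) c.
Proof. apply pt_eq; unfold ptadd, val; simpl; ring. Qed.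
Lemma shift_shift (a b : P) (A : P -> Prop) : shift b (shift a A) = shift (ptadd a b) A.
Proof. extensionality s; unfold shift; rewrite ptadd_assoc; reflexivity. Qed.

Lemma ufadd_assoc (p q r : filt S) : ufadd p (ufadd q r) = ufadd (ufadd p q) r.
Proof.
  extensionality A. unfold ufadd. f_equal. extensionality a. f_equal.
  extensionality b. change (r (shift b (shift a A)) = r (shift (ptadd a b) A)). rewrite shift_shift. reflexivity.
Qed.

Lemma ufadd_UF p q : UF p -> UF q -> UF (ufadd p q).
Proof.
  intros Hp Hq. unfold ufadd. split; [|split; [|split; [|split]]].
  - apply (uf_mono Hp (uf_T Hp)). intros; apply (uf_T Hq).
  - intros h. destruct (uf_ex Hp h) as [s hs]. exact (uf_F Hq hs).
  - intros A B hA hAB. apply (uf_mono Hp hA). intros s hs. apply (uf_mono Hq hs).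
    intros v; unfold shift; auto.
  - intros A B hA hB. apply (uf_mono Hp (uf_and Hp hA hB)). intros s [h1 h2].
    exact (uf_and Hq h1 h2).
  - intros A. destruct (uf_em (fun x => q (shift x A)) Hp) as [h|h]; [left; auto|right].
    apply (uf_mono Hp h). intros s hs. apply (uf_notp Hq hs).
Qed.

Definition O (p : filt S) := Oplus p.
Lemma O_UF p : O p -> UF p.
Proof. intros [h _]; exact h. Qed.

Lemma O_add {p q} : O p -> O q -> O (ufadd p q).
Proof.
  intros [Hp ep] [Hq eq]. split. apply ufadd_UF; auto.
  intros eps he. unfold ufadd. apply (uf_mono Hp (ep (eps/2) ltac:(lra))).
  intros s hs. apply (uf_mono Hq (eq (eps/2) ltac:(lra))). intros v hv.
  unfold shift, ptadd, val in *; simpl. lra.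
Qed.

Definition cl (C : filt S -> Prop) (p : filt S) := forall A, p A -> exists c, C c /\ c A.
Definition closed (C : filt S -> Prop) := forall p, UF p -> cl C p -> C p.
Definition Good (Pr : (filt S -> Prop) -> Prop) (C : filt S -> Prop) :=
  (exists c, C c) /\ (forall c, C c -> UF c) /\ closed C /\ Pr C.

Lemma uf_exists (G : (P -> Prop) -> Prop) : G (fun _ => True) -> ~ G (fun _ => False) ->
  (forall A B, G A -> (forall s, A s -> B s) -> G B) ->
  (forall A B, G A -> G B -> G (fun s => A s /\ B s)) ->
  exists p, UF p /\ forall A, G A -> p A.
Proof. intros h1 h2 h3 h4; destruct (uf_lemma _ G h1 h2 h3 h4) as [p [k1 k2]].
  exists p; split; auto. Qed.

Lemma Good_ext Pr (C D : filt S -> Prop) : Good Pr C -> (forall c, C c <-> D c) -> Good Pr D.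
Proof. intros h e. replace D with C; auto. extensionality c; apply propositional_extensionality; auto. Qed.

Lemma cl_in_closed (C : filt S -> Prop) p : (forall c, C c -> UF c) -> closed C -> UF p ->
  (forall E, (forall c, C c -> c (fun s => ~ E s)) -> p (fun s => ~ E s)) -> C p.
Proof.
  intros hu hc hp hE. apply hc; auto. intros A hA. apply NNPP; intros hn.
  apply (uf_not hp hA). apply hE. intros c hcC. apply (uf_notp (hu c hcC)). intros h; apply hn; eauto.
Qed.

Lemma chain_good (Pr : (filt S -> Prop) -> Prop)
  (HPr : forall F : (filt S -> Prop) -> Prop, (exists C, F C) -> (forall C, F C -> Pr C) ->
     Pr (fun c => forall C, F C -> C c))
  (F : (filt S -> Prop) -> Prop) : (exists C, F C) -> (forall C, F C -> Good Pr C) ->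
  (forall C1 C2, F C1 -> F C2 -> (forall c, C1 c -> C2 c) \/ (forall c, C2 c -> C1 c)) ->
  Good Pr (fun c => forall C, F C -> C c).
Proof.
  intros [C0 hC0] hG hch.
  split; [|split; [|split]].
  - set (G := fun A : P -> Prop => exists C, F C /\ forall c, C c -> c A).
    destruct (uf_exists G) as [p [hp hGp]].
    + exists C0; split; auto. intros c hc. apply (uf_T (proj1 (proj2 (hG C0 hC0)) c hc)).
    + intros [C [hC h]]. destruct (hG C hC) as [[c hc] [hu _]]. exact (uf_F (hu c hc) (h c hc)).
    + intros A B [C [hC h]] hAB. exists C; split; auto. intros c hc.
      exact (uf_mono (proj1 (proj2 (hG C hC)) c hc) (h c hc) hAB).
    + intros A B [C1 [h1 k1]] [C2 [h2 k2]]. destruct (hch C1 C2 h1 h2) as [s|s].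
      * unfold G; exists C1; split; auto. intros c hc. apply (uf_and (proj1 (proj2 (hG C1 h1)) c hc)); [exact (k1 c hc)|exact (k2 c (s c hc))].
      * unfold G; exists C2; split; auto. intros c hc. apply (uf_and (proj1 (proj2 (hG C2 h2)) c hc)); [exact (k1 c (s c hc))|exact (k2 c hc)].
    + exists p. intros C hC. destruct (hG C hC) as [_ [hu [hc _]]].
      apply cl_in_closed; auto. intros E hE. apply hGp. exists C; auto.
  - intros c hc. exact (proj1 (proj2 (hG C0 hC0)) c (hc C0 hC0)).
  - intros p hp hcl C hC. destruct (hG C hC) as [_ [_ [hc _]]]. apply hc; auto.
    intros A hA. destruct (hcl A hA) as [c [h1 h2]]. exists c; split; [exact (h1 C hC)|exact h2].
  - apply HPr. exists C0; auto. intros C hC; exact (proj2 (proj2 (proj2 (hG C hC)))).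
Qed.

Lemma minimal_good (Pr : (filt S -> Prop) -> Prop)
  (HPr : forall F : (filt S -> Prop) -> Prop, (exists C, F C) -> (forall C, F C -> Pr C) ->
     Pr (fun c => forall C, F C -> C c)) C0 :
  Good Pr C0 -> exists A, Good Pr A /\ (forall c, A c -> C0 c) /\
  forall B, Good Pr B -> (forall c, B c -> A c) -> forall c, A c -> B c.
Proof.
  intros hC0.
  destruct (@classical_sets.Zorn_bigcup (filt S) (fun D => Good Pr (fun c => C0 c /\ ~ D c))) as [D [hD hmax]].
  - intros F hF htot.
    set (FF := fun C : filt S -> Prop => C = C0 \/ exists D, F D /\ C = (fun c => C0 c /\ ~ D c)).
    apply Good_ext with (fun c => forall C, FF C -> C c).
    + apply chain_good; auto.
      * exists C0; left; auto.
      * intros C [->|[D [hD ->]]]; [exact hC0|]. apply (hF D hD).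
      * intros C1 C2 [->|[D1 [h1 ->]]] [->|[D2 [h2 ->]]].
        -- left; auto.
        -- right; intros c [hc _]; auto.
        -- left; intros c [hc _]; auto.
        -- destruct (htot D1 D2 h1 h2) as [s|s].
           ++ right. intros c [hc hn]; split; auto.
           ++ left. intros c [hc hn]; split; auto.
    + intros c; split.
      * intros h. split. apply h; left; auto. intros [X hX hXc].
        destruct (h (fun c => C0 c /\ ~ X c)) as [_ hn]. right; exists X; auto. auto.
      * intros [hc hn] C [->|[X [hX ->]]]; auto. split; auto. intros hx; apply hn. exists X; auto.
  - exists (fun c => C0 c /\ ~ D c). split; auto. split. intros c [h _]; auto.
    intros B hB hBA c [hc hnc]. apply NNPP; intros hnB.
    set (D' := fun c => D c \/ ~ B c).
    assert (hP : Good Pr (fun c => C0 c /\ ~ D' c)).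
    { apply Good_ext with B; auto. intros a; split.
      - intros hb. destruct (hBA a hb) as [h1 h2]. split; auto. intros [h|h]; auto.
      - intros [h1 h2]. apply NNPP; intros h; apply h2; right; auto. }
    apply (hmax D'); auto. split.
    + intros a ha; left; auto.
    + intros hsub. apply hnc. apply hsub. right. exact hnB.
Qed.

Lemma image_closed (C : filt S -> Prop) z : (forall c, C c -> UF c) -> closed C -> UF z ->
  closed (fun p => exists a, C a /\ p = ufadd a z).
Proof.
  intros hu hc hz p hp hcl.
  set (G := fun E : P -> Prop => exists A D, p A /\ (forall c, C c -> c D) /\
             forall s, z (shift s A) /\ D s -> E s).
  destruct (uf_exists G) as [a [ha hGa]].
  - exists (fun _ => True), (fun _ => True). split; [apply (uf_T hp)|]. split; auto.
    intros c hc'; apply (uf_T (hu c hc')).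
  - intros [A [D [hA [hD himp]]]]. destruct (hcl A hA) as [c' [[a [hCa ->]] hcA]].
    apply (uf_F (hu a hCa)). unfold ufadd in hcA. apply (uf_mono (hu a hCa) (uf_and (hu a hCa) hcA (hD a hCa))).
    intros s hs; apply (himp s hs).
  - intros A B [A' [D [h1 [h2 h3]]]] hAB. exists A', D; split; [exact h1|split; [exact h2|intros s hs; apply hAB, h3, hs]].
  - intros E1 E2 [A1 [D1 [h1 [h2 h3]]]] [A2 [D2 [k1 [k2 k3]]]].
    exists (fun s => A1 s /\ A2 s), (fun s => D1 s /\ D2 s). split; [apply (uf_and hp); [exact h1|exact k1]|].
    split. intros c hcc. apply (uf_and (hu c hcc)); [exact (h2 c hcc)|exact (k2 c hcc)].
    intros s [hs [hd1 hd2]]. split.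
    + apply h3; split; [|exact hd1]. apply (uf_mono hz hs). intros v [e _]; exact e.
    + apply k3; split; [|exact hd2]. apply (uf_mono hz hs). intros v [_ e]; exact e.
  - exists a. split.
    + apply cl_in_closed; auto. intros E hE. apply hGa. exists (fun _ => True), (fun s => ~ E s).
      split; [apply (uf_T hp)|]. split; auto. intros s [_ h]; auto.
    + extensionality A. apply propositional_extensionality. unfold ufadd. split.
      * intros hA. apply hGa. exists A, (fun _ => True). split; auto. split.
        intros c hcc; apply (uf_T (hu c hcc)). intros s [h _]; auto.
      * intros hA. apply NNPP; intros hn. pose proof (uf_notp hp hn) as hn'.
        assert (a (fun s => z (shift s (fun v => ~ A v)))) as h2.
        { apply hGa. exists (fun v => ~ A v), (fun _ => True). split; auto. split.
          intros c hcc; apply (uf_T (hu c hcc)). intros s [h _]; auto. }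
        destruct (uf_ex ha (uf_and ha hA h2)) as [s [k1 k2]]. exact (uf_not hz k1 k2).
Qed.

Lemma closed_inter (C1 C2 : filt S -> Prop) : closed C1 -> closed C2 -> closed (fun c => C1 c /\ C2 c).
Proof. intros h1 h2 p hp hcl. split; [apply h1|apply h2]; auto; intros A hA;
  destruct (hcl A hA) as [c [[k1 k2] k3]]; eauto. Qed.

Lemma closed_fix w : UF w -> closed (fun a => UF a /\ ufadd a w = w).
Proof.
  intros hw p hp hcl. split; auto. extensionality D. apply propositional_extensionality. split.
  - intros h. destruct (hcl _ h) as [c [[hc e] hcD]]. rewrite <- e. exact hcD.
  - intros h. apply NNPP; intros hn. pose proof (uf_notp hp hn) as hn'.
    destruct (hcl _ hn') as [c [[hc e] hcD]].
    assert (ufadd c w D) as h2 by (rewrite e; auto).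
    unfold ufadd in h2. destruct (uf_ex hc (uf_and hc h2 hcD)) as [s [k1 k2]]. auto.
Qed.

Definition semigrp (C : filt S -> Prop) := forall a b, C a -> C b -> C (ufadd a b).

Lemma ellis M : Good semigrp M -> exists u, M u /\ ufadd u u = u.
Proof.
  intros hM.
  assert (HPr : forall F : (filt S -> Prop) -> Prop, (exists C, F C) -> (forall C, F C -> semigrp C) ->
     semigrp (fun c => forall C, F C -> C c)).
  { intros F _ h a b ha hb C hC. apply (h C hC); [exact (ha C hC)|exact (hb C hC)]. }
  destruct (minimal_good semigrp HPr M hM) as [A [[[w hw] [hu [hc hs]]] [hAM hmin]]].
  assert (hA' : Good semigrp (fun p => exists a, A a /\ p = ufadd a w)).
  { split; [|split; [|split]].
    - exists (ufadd w w); eauto.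
    - intros c [a [ha ->]]. apply ufadd_UF; auto.
    - apply image_closed; auto.
    - intros p1 p2 [a [ha ->]] [b [hb ->]]. exists (ufadd (ufadd a w) b). split.
      apply hs; auto. rewrite ufadd_assoc; auto. }
  assert (hsub : forall c, (exists a, A a /\ c = ufadd a w) -> A c) by (intros c [a [ha ->]]; apply hs; [exact ha|exact hw]).
  destruct (hmin _ hA' hsub w hw) as [a [ha e]].
  assert (hB : Good semigrp (fun a => A a /\ (UF a /\ ufadd a w = w))).
  { split; [|split; [|split]].
    - exists a; split; auto.
    - intros c [h _]; auto.
    - apply closed_inter; auto. apply closed_fix; auto.
    - intros b1 b2 [h1 [k1 e1]] [h2 [k2 e2]]. split; [apply hs; auto|]. split. apply ufadd_UF; auto.
      rewrite <- ufadd_assoc. rewrite e2; auto. }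
  destruct (hmin _ hB (fun c h => proj1 h) w hw) as [_ [_ e2]].
  exists w; split; auto.
Qed.

Definition LM v := O v /\ forall q, O q -> exists r, O r /\ ufadd r (ufadd q v) = v.
Definition lideal (C : filt S -> Prop) := forall q c, O q -> C c -> C (ufadd q c).

Lemma O_closed : closed O.
Proof.
  intros p hp hcl. split; auto. intros eps he. apply NNPP; intros hn.
  destruct (hcl _ (uf_notp hp hn)) as [c [[hc ec] h]]. exact (uf_not hc (ec eps he) h).
Qed.

Lemma O_nonempty : dense_in_pos S -> exists p, O p.
Proof.
  intros HS. destruct (uf_exists (fun E => exists eps, 0 < eps /\ forall s, val s < eps -> E s)) as [p [hp hG]].
  - exists 1; split; auto; lra.
  - intros [eps [he h]]. destruct (HS (eps/2) eps ltac:(lra) ltac:(lra)) as [s [hs [_ h2]]].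
    exact (h (exist _ s hs) h2).
  - intros A B [eps [he h]] hAB; exists eps; split; auto.
  - intros A B [e1 [h1 k1]] [e2 [h2 k2]]. exists (Rmin e1 e2); split.
    apply Rmin_glb_lt; auto. intros s hs. split; [apply k1|apply k2];
    eapply Rlt_le_trans; eauto; [apply Rmin_l|apply Rmin_r].
  - exists p; split; auto. intros eps he. apply hG. exists eps; auto.
Qed.

Lemma LM_exists : dense_in_pos S -> exists v, LM v.
Proof.
  intros HS.
  assert (HPr : forall F : (filt S -> Prop) -> Prop, (exists C, F C) -> (forall C, F C -> lideal C) ->
     lideal (fun c => forall C, F C -> C c)).
  { intros F _ h q c hq hc C hC. apply (h C hC); [exact hq|exact (hc C hC)]. }
  assert (hO : Good lideal O).
  { split; [apply O_nonempty; auto|]. split; [apply O_UF|]. split; [apply O_closed|].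
    intros q c; apply O_add. }
  destruct (minimal_good lideal HPr O hO) as [A [[[v hv] [hu [hc hl]]] [hAO hmin]]].
  exists v. split; auto. intros q hq.
  assert (hqv : A (ufadd q v)) by (apply hl; auto).
  assert (hL : Good lideal (fun p => exists a, O a /\ p = ufadd a (ufadd q v))).
  { split; [|split; [|split]].
    - exists (ufadd q (ufadd q v)); eauto.
    - intros c [a [ha ->]]. apply ufadd_UF; auto. apply O_UF; auto.
    - apply image_closed; auto. apply O_UF. apply O_closed.
    - intros b c hb [a [ha ->]]. exists (ufadd b a); split. apply O_add; auto. apply ufadd_assoc. }
  assert (hsub : forall c, (exists a, O a /\ c = ufadd a (ufadd q v)) -> A c) by (intros c [a [ha ->]]; apply hl; [exact ha|exact hqv]).
  destruct (hmin _ hL hsub v hv) as [r [hr e]].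
  exists r; split; auto.
Qed.

Lemma LM_left p v : O p -> LM v -> LM (ufadd p v).
Proof.
  intros hp [hv hm]. split. apply O_add; auto. intros q hq.
  destruct (hm (ufadd q p) (O_add hq hp)) as [r [hr e]].
  exists (ufadd p r). split. apply O_add; auto.
  rewrite <- (ufadd_assoc p r). rewrite (ufadd_assoc q p v). rewrite e. reflexivity.
Qed.

Lemma LM_right p v : O p -> LM v -> LM (ufadd v p).
Proof.
  intros hp [hv hm]. split. apply O_add; auto. intros q hq.
  destruct (hm q hq) as [r [hr e]]. exists r; split; auto.
  rewrite ufadd_assoc, ufadd_assoc. rewrite <- (ufadd_assoc r q v). rewrite e. reflexivity.
Qed.

Lemma LM_ideal : (exists v, LM v) -> is_ideal_Oplus LM.
Proof.
  intros hv. split; auto. split. intros p [h _]; auto.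
  intros p q hp hq. split. apply LM_left; auto. apply LM_right; auto.
Qed.

Lemma LM_in_K u : LM u -> in_K_Oplus u.
Proof.
  intros [hu hm]. split; auto. intros I [[w hw] [hIO hI]].
  destruct (hm w (hIO w hw)) as [r [hr e]]. rewrite <- e.
  apply (hI r); auto. apply (hI u w hu hw).
Qed.

Lemma K_LM u : dense_in_pos S -> in_K_Oplus u -> LM u.
Proof. intros HS [_ h]. apply h. apply LM_ideal. apply LM_exists; auto. Qed.

Section Dyn.
Variable X : Type.
Variable t : topology X.
Variable T : pt S -> X -> X.
Hypothesis HT : dynsys t T.

Lemma hcont : forall s, continuous t (T s).
Proof. apply HT. Qed.
Lemma hact : forall s u z, T s (T u z) = T (ptadd s u) z.
Proof. apply HT. Qed.
Lemma hhaus : hausdorff t.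
Proof. apply HT. Qed.

Lemma plim_exists p (f : pt S -> X) : UF p -> exists z, plim t p f z.
Proof.
  intros hp. apply NNPP; intros hn.
  destruct HT as [hc _].
  set (F := fun A : X -> Prop => open t A /\ ~ p (fun s => A (f s))).
  destruct (hc F) as [l [hl hcov]].
  - intros A [h _]; auto.
  - intros z. apply NNPP; intros hz. apply hn. exists z. intros W hW hWz.
    apply NNPP; intros hp'. apply hz. exists W. split; [split; auto| auto].
  - destruct (uf_list l (fun A s => A (f s)) hp) as [A [hA hpA]].
    + apply (uf_mono hp (uf_T hp)). intros s _. destruct (hcov (f s)) as [A [h1 h2]]; eauto.
    + exact (proj2 (hl A hA) hpA).
Qed.

Lemma plim_unique p f z1 z2 : UF p -> plim t p f z1 -> plim t p f z2 -> z1 = z2.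
Proof.
  intros hp h1 h2. apply NNPP; intros hne.
  destruct (hhaus z1 z2 hne) as [U [V [hU [hV [hUz [hVz hd]]]]]].
  destruct (uf_ex hp (uf_and hp (h1 U hU hUz) (h2 V hV hVz))) as [s [a b]]. exact (hd _ a b).
Qed.

Lemma Tp_comp p q x z w : UF q -> Tp_is t T q x z -> Tp_is t T p z w -> UF p ->
  Tp_is t T (ufadd p q) x w.
Proof.
  intros hq hqz hpw hp W hW hWw. unfold ufadd. apply (uf_mono hp (hpw W hW hWw)).
  intros s hs.
  apply (uf_mono hq (hqz _ (hcont s W hW) hs)). intros v hv. unfold shift. cbv beta in hv.
  rewrite hact in hv. exact hv.
Qed.

Definition clX (N : X -> Prop) c := forall A, open t A -> A c -> exists d, A d /\ N d.

Lemma regular a U : open t U -> U a -> exists N, open t N /\ N a /\ forall c, clX N c -> U c.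
Proof.
  intros hU hUa. destruct HT as [hc _].
  set (F := fun A : X -> Prop => open t A /\ (A = U \/ exists Pn, open t Pn /\ Pn a /\
                 forall d, Pn d -> A d -> False)).
  destruct (hc F) as [l [hl hcov]].
  - intros A [h _]; auto.
  - intros z. destruct (classic (U z)) as [h|h].
    + exists U. split; [split; [exact hU|left; reflexivity]|exact h].
    + assert (a <> z) as hne by (intros ->; auto).
      destruct (hhaus a z hne) as [Pn [Q [h1 [h2 [h3 [h4 h5]]]]]].
      exists Q. split; [split; [exact h2|right; exists Pn; split; [exact h1|split; [exact h3|]]]|exact h4].
      intros d k1 k2; exact (h5 d k1 k2).
  - assert (forall l', (forall A, In A l' -> F A) -> exists N, open t N /\ N a /\
       forall A, In A l' -> A = U \/ forall d, N d -> A d -> False) as key.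
    { induction l' as [|A l' IH]; intros hl'.
      - exists (fun _ => True). split. apply open_full. split; [exact I|intros B []].
      - destruct IH as [N [hN [hNa hNl]]]. intros B hB; apply hl'; right; auto.
        destruct (hl' A (or_introl eq_refl)) as [hAo [->|[Pn [hPo [hPa hPd]]]]].
        + exists N. split; auto. split; auto. intros B [<-|hB]; auto.
        + exists (fun x => N x /\ Pn x). split. apply open_inter; auto. split; auto.
          intros B [<-|hB]. right. intros d [_ k] k2; exact (hPd d k k2).
          destruct (hNl B hB) as [h|h]; auto. right. intros d [k _]; exact (h d k). }
    destruct (key l hl) as [N [hN [hNa hNl]]]. exists N. split; auto. split; auto.
    intros c hcl. destruct (hcov c) as [A [hA hAc]].
    destruct (hNl A hA) as [->|h]; auto.
    destruct (hcl A (proj1 (hl A hA)) hAc) as [d [k1 k2]]. destruct (h d k2 k1).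
Qed.

Lemma not_clX N c : ~ clX N c -> exists A, open t A /\ A c /\ forall d, A d -> N d -> False.
Proof.
  intros h. apply NNPP; intros hn. apply h. intros A hA hAc. apply NNPP; intros hn2.
  apply hn. exists A; split; auto. split; auto. intros d h1 h2; apply hn2; eauto.
Qed.

Lemma clX_self N c : N c -> clX N c.
Proof. intros h A _ hA; exists c; auto. Qed.

Lemma prod_open_full : prod_open t (fun _ => True).
Proof. intros z _. exists (fun _ => True), (fun _ => True). split. apply open_full. split. apply open_full. auto. Qed.

Lemma prox_point x y : proximal_near_zero t T x y ->
  exists p a, O p /\ Tp_is t T p x a /\ Tp_is t T p y a.
Proof.
  intros hprox.
  set (G := fun E : pt S -> Prop => exists U eps, prod_open t U /\ (forall z, U (z,z)) /\ 0 < eps /\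
       forall s, val s < eps /\ U (T s x, T s y) -> E s).
  destruct (uf_exists G) as [p [hp hGp]].
  - exists (fun _ => True), 1. split. apply prod_open_full. split; auto. split; auto. lra.
  - intros [U [eps [hU [hd [he h]]]]]. destruct (hprox U hU hd eps he) as [s [k1 k2]]. exact (h s (conj k1 k2)).
  - intros A B [U [eps [hU [hd [he h]]]]] hAB. exists U, eps. split; [exact hU|split; [exact hd|split; [exact he|intros s hs; apply hAB, h, hs]]].
  - intros A B [U1 [e1 [hU1 [hd1 [he1 h1]]]]] [U2 [e2 [hU2 [hd2 [he2 h2]]]]].
    exists (fun z => U1 z /\ U2 z), (Rmin e1 e2). split; [|split; [|split]].
    + intros z [k1 k2]. destruct (hU1 z k1) as [A1 [B1 [a1 [b1 [c1 [d1 f1]]]]]].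
      destruct (hU2 z k2) as [A2 [B2 [a2 [b2 [c2 [d2 f2]]]]]].
      exists (fun a => A1 a /\ A2 a), (fun b => B1 b /\ B2 b). split. apply open_inter; auto.
      split. apply open_inter; auto. split; auto. split; auto. intros a b [m1 m2] [n1 n2]; auto.
    + intros z; auto.
    + apply Rmin_glb_lt; auto.
    + intros s [hs [k1 k2]]. split; [apply h1|apply h2]; split; auto;
      eapply Rlt_le_trans; eauto; [apply Rmin_l|apply Rmin_r].
  - assert (hO : O p).
    { split; auto. intros eps he. apply hGp. exists (fun _ => True), eps. split. apply prod_open_full.
      split; auto. split; auto. intros s [h _]; auto. }
    destruct (plim_exists _ (fun s => T s x) hp) as [a ha].
    destruct (plim_exists _ (fun s => T s y) hp) as [b hb].
    exists p, a. split; auto. split; auto. replace a with b; auto.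
    apply NNPP; intros hne. apply not_eq_sym in hne.
    destruct (hhaus a b hne) as [Ua [Ub [hUa [hUb [hUaa [hUbb hd]]]]]].
    destruct (regular a Ua hUa hUaa) as [Na [hNa [hNaa hNacl]]].
    destruct (regular b Ub hUb hUbb) as [Nb [hNb [hNbb hNbcl]]].
    set (U := fun z : X * X => ~ clX Na (fst z) \/ ~ clX Nb (snd z)).
    assert (hpU : p (fun s => U (T s x, T s y))).
    { apply hGp. exists U, 1. split; [|split; [|split]].
      - intros z [h|h].
        + destruct (not_clX _ _ h) as [A [hA [hAc hAd]]]. exists A, (fun _ => True).
          split; auto. split. apply open_full. split; auto. split; auto.
          intros a' b' ha' _. left. simpl. intros hc. destruct (hc A hA ha') as [d [k1 k2]]. exact (hAd d k1 k2).
        + destruct (not_clX _ _ h) as [B [hB [hBc hBd]]]. exists (fun _ => True), B.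
          split. apply open_full. split; auto. split; auto. split; auto.
          intros a' b' _ hb'. right. simpl. intros hc. destruct (hc B hB hb') as [d [k1 k2]]. exact (hBd d k1 k2).
      - intros z. unfold U; simpl. destruct (classic (clX Na z)) as [h1|h1]; auto.
        destruct (classic (clX Nb z)) as [h2|h2]; auto. exfalso. exact (hd z (hNacl z h1) (hNbcl z h2)).
      - lra.
      - intros s [_ h]; exact h. }
    destruct (uf_ex hp (uf_and hp hpU (uf_and hp (ha Na hNa hNaa) (hb Nb hNb hNbb)))) as [s [hU [k1 k2]]].
    destruct hU as [h|h]; apply h; apply clX_self; auto.
Qed.

Lemma unif_point y q z : unif_recurrent_near_zero t T y -> O q -> Tp_is t T q y z ->
  exists r, O r /\ Tp_is t T r z y.
Proof.
  intros hur hq hqz.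
  set (G := fun E : pt S -> Prop => exists V eps, open t V /\ V y /\ 0 < eps /\
       forall s, (val s < eps /\ forall N, open t N -> N (T s z) -> exists w, N w /\ V w) -> E s).
  destruct (uf_exists G) as [r [hr hGr]].
  - exists (fun _ => True), 1. split. apply open_full. split; auto. split; auto. lra.
  - intros [V [eps [hV [hVy [he h]]]]].
    destruct (hur V hV hVy eps he) as [Fl [delta [_ [hFe [hd hcov]]]]].
    destruct (uf_list Fl (fun u s => shift u (fun s => V (T s y)) s) (O_UF _ hq)) as [u [hu hqu]].
    + apply (uf_mono (O_UF _ hq) (proj2 hq delta hd)). intros s hs. exact (hcov s hs).
    + apply (h u). split. exact (hFe u hu).
      intros N hN hNu. 
      destruct (uf_ex (O_UF _ hq) (uf_and (O_UF _ hq) hqu (hqz _ (hcont u N hN) hNu))) as [s [k1 k2]].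
      exists (T (ptadd u s) y). unfold shift in k1. split; auto. cbv beta in k2. rewrite <- hact. exact k2.
  - intros A B [V [eps [hV [hVy [he h]]]]] hAB. exists V, eps. split; [exact hV|split; [exact hVy|split; [exact he|intros s hs; apply hAB, h, hs]]].
  - intros A B [V1 [e1 [hV1 [hy1 [he1 h1]]]]] [V2 [e2 [hV2 [hy2 [he2 h2]]]]].
    exists (fun w => V1 w /\ V2 w), (Rmin e1 e2). split; [apply open_inter; auto|].
    split; [auto|]. split; [apply Rmin_glb_lt; auto|].
    intros s [hs k]. split.
    + apply h1. split. eapply Rlt_le_trans; [exact hs|apply Rmin_l].
      intros N hN hNs; destruct (k N hN hNs) as [w [m [n1 n2]]]; exists w; split; [exact m|exact n1].
    + apply h2. split. eapply Rlt_le_trans; [exact hs|apply Rmin_r].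
      intros N hN hNs; destruct (k N hN hNs) as [w [m [n1 n2]]]; exists w; split; [exact m|exact n2].
  - assert (hO : O r).
    { split; auto. intros eps he. apply hGr. exists (fun _ => True), eps. split. apply open_full.
      split; auto. split; auto. intros s [h _]; auto. }
    exists r. split; auto.
    destruct (plim_exists _ (fun s => T s z) hr) as [w hw].
    replace y with w; auto. apply NNPP; intros hne.
    destruct (hhaus w y hne) as [U [V [hU [hV [hUw [hVy hd]]]]]].
    assert (h2 : r (fun s => forall N, open t N -> N (T s z) -> exists w, N w /\ V w)).
    { apply hGr. exists V, 1. split; auto. split; auto. split; [lra|]. intros s [_ h]; exact h. }
    destruct (uf_ex hr (uf_and hr (hw U hU hUw) h2)) as [s [k1 k2]].
    destruct (k2 U hU k1) as [w' [m1 m2]]. exact (hd w' m1 m2).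
Qed.

Lemma closed_Tp x y : closed (fun w => UF w /\ Tp_is t T w x y).
Proof.
  intros p hp hcl. split; auto.
  destruct (plim_exists _ (fun s => T s x) hp) as [w hw].
  replace y with w; auto. apply NNPP; intros hne.
  destruct (hhaus w y hne) as [U [V [hU [hV [hUw [hVy hd]]]]]].
  destruct (hcl _ (hw U hU hUw)) as [c [[hc hcy] hcU]].
  destruct (uf_ex hc (uf_and hc hcU (hcy V hV hVy))) as [s [k1 k2]]. exact (hd _ k1 k2).
Qed.

Arguments Tp_comp {p q x z w}.
Arguments ufadd_UF {p q}.
Arguments K_LM {u}.
Arguments LM_right {p v}.
Arguments LM_left {p v}.
Arguments prox_point {x y}.
Arguments unif_point {y q z}.
Arguments plim_unique {p f z1 z2}.

Lemma main (HS : dense_in_pos S) x y :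
  (exists u : filt S, in_K_Oplus u /\ idempotent u /\ Tp_is t T u x y) <->
  (unif_recurrent_near_zero t T y /\ proximal_near_zero t T x y).
Proof.
  split.
  - intros [u [hK [hid hux]]].
    pose proof (K_LM HS hK) as hLM. destruct hLM as [hu hm]. pose proof (O_UF _ hu) as huf.
    assert (huy : Tp_is t T u y y).
    { destruct (plim_exists _ (fun s => T s y) huf) as [y' hy'].
      pose proof (Tp_comp huf hux hy' huf) as h. unfold idempotent in hid. rewrite hid in h.
      replace y with y' at 2; auto. eapply plim_unique; eauto. }
    split.
    + intros W hW hWy eps he. apply NNPP; intros hns.
      set (B := fun s : pt S => W (T s y)).
      set (G := fun E : pt S -> Prop => exists (Fl : list (pt S)) delta,
           (forall v, In v Fl -> val v < eps) /\ 0 < delta /\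
           forall s, (val s < delta /\ forall v, In v Fl -> ~ shift v B s) -> E s).
      destruct (uf_exists G) as [qq [hqq hGq]].
      * exists nil, 1. split. intros v []. split. lra. auto.
      * intros [Fl [delta [hF [hd himp]]]].
        destruct (classic (Fl = nil)) as [->|hne].
        -- destruct (HS (delta/2) delta ltac:(lra) ltac:(lra)) as [s [hs [_ h2]]].
           apply (himp (exist _ s hs)). split. exact h2. intros v [].
        -- apply hns. exists Fl, delta. split; auto. split; auto. split; auto.
           intros s hs. apply NNPP; intros hn. apply (himp s). split; auto.
           intros v hv hsv. apply hn. exists v; auto.
      * intros A1 A2 [Fl [delta [hF [hd himp]]]] hA. exists Fl, delta. split; [exact hF|split; [exact hd|]].
        intros s hs. apply hA, himp, hs.
      * intros A1 A2 [F1 [d1 [hF1 [hd1 h1]]]] [F2 [d2 [hF2 [hd2 h2]]]].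
        exists (F1 ++ F2), (Rmin d1 d2). split.
        intros v hv. apply in_app_or in hv. destruct hv; auto.
        split. apply Rmin_glb_lt; auto.
        intros s [hs hv]. split.
        -- apply h1. split. eapply Rlt_le_trans; [exact hs|apply Rmin_l].
           intros v k. apply hv. apply in_or_app; auto.
        -- apply h2. split. eapply Rlt_le_trans; [exact hs|apply Rmin_r].
           intros v k. apply hv. apply in_or_app; auto.
      * assert (hqO : O qq).
        { split; auto. intros e' he'. apply hGq. exists nil, e'. split. intros v []. split; auto.
          intros s [h _]; exact h. }
        destruct (hm qq hqO) as [r [hr e]].
        destruct (plim_exists _ (fun s => T s y) hqq) as [z hz].
        pose proof (Tp_comp huf huy hz hqq) as hqz.
        destruct (plim_exists _ (fun s => T s z) (O_UF _ hr)) as [w hw].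
        pose proof (Tp_comp (ufadd_UF hqq huf) hqz hw (O_UF _ hr)) as hrw. rewrite e in hrw.
        assert (w = y) as -> by exact (plim_unique huf hrw huy).
        destruct (uf_ex (O_UF _ hr) (uf_and (O_UF _ hr) (hw W hW hWy) (proj2 hr eps he))) as [s0 [k1 k2]].
        assert (hq1 : qq (shift s0 B)).
        { apply (uf_mono hqq (hz _ (hcont s0 W hW) k1)). intros s hs. cbv beta in hs.
          unfold shift, B. rewrite <- hact. exact hs. }
        assert (hq2 : qq (fun s => ~ shift s0 B s)).
        { apply hGq. exists (s0 :: nil), 1. split. intros v [<-|[]]; exact k2. split. lra.
          intros s [_ h]. apply h. left; auto. }
        exact (uf_not hqq hq1 hq2).
    + intros U hU hdiag eps he.
      destruct (hU (y, y) (hdiag y)) as [A [B [hA [hB [hAy [hBy hAB]]]]]].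
      destruct (uf_ex huf (uf_and huf (hux A hA hAy) (uf_and huf (huy B hB hBy) (proj2 hu eps he))))
        as [s [k1 [k2 k3]]].
      exists s. split; auto.
  - intros [hur hprox].
    destruct (prox_point hprox) as [p [a [hp [hpx hpy]]]].
    destruct (LM_exists HS) as [v hv].
    pose proof (LM_right hp hv) as hq0. set (q0 := ufadd v p) in *.
    pose proof (O_UF _ (proj1 hv)) as hvu. pose proof (O_UF _ hp) as hpu.
    destruct (plim_exists _ (fun s => T s a) hvu) as [z hz].
    pose proof (Tp_comp hpu hpx hz hvu) as hq0x.
    pose proof (Tp_comp hpu hpy hz hvu) as hq0y.
    destruct (unif_point hur (proj1 hq0) hq0y) as [r [hr hrz]].
    pose proof (LM_left hr hq0) as hq. set (q := ufadd r q0) in *.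
    pose proof (O_UF _ (proj1 hq0)) as hq0u. pose proof (O_UF _ hr) as hru.
    pose proof (Tp_comp hq0u hq0x hrz hru) as hqx.
    pose proof (Tp_comp hq0u hq0y hrz hru) as hqy.
    pose proof (O_UF _ (proj1 hq)) as hqu.
    set (M := fun w => (exists a, O a /\ w = ufadd a q) /\ (UF w /\ Tp_is t T w x y) /\ (UF w /\ Tp_is t T w y y)).
    destruct (ellis M) as [u [[[a' [ha' ->]] [[hu1 hux] _]] hid]].
    + split; [|split; [|split]].
      * destruct (proj2 hq q (proj1 hq)) as [r' [hr' e]]. exists q. split; [|split; split; auto].
        exists (ufadd r' q). split. exact (O_add hr' (proj1 hq)). rewrite <- ufadd_assoc. symmetry; exact e.
      * intros c [_ [[h _] _]]; exact h.
      * apply closed_inter. apply image_closed; auto. apply O_UF. apply O_closed.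
        apply closed_inter; apply closed_Tp.
      * intros w1 w2 [[a1 [ha1 e1]] [[u1 h1x] [_ h1y]]] [[a2 [ha2 e2]] [[u2 h2x] [_ h2y]]].
        split; [|split; split].
        -- exists (ufadd w1 a2). split. apply O_add; auto. rewrite e1. apply O_add; auto. apply (proj1 hq).
           rewrite e2. apply ufadd_assoc.
        -- apply ufadd_UF; auto.
        -- apply (Tp_comp u2 h2x h1y u1).
        -- apply ufadd_UF; auto.
        -- apply (Tp_comp u2 h2y h1y u1).
    + exists (ufadd a' q). split. apply LM_in_K. apply LM_left; auto. split; auto.
Qed.
End Dyn.
End Beta.

Theorem lemma2p10 (S : Subsemigroup) (HS : dense_in_pos S)
  (X : Type) (t : topology X) (T : pt S -> X -> X) (HT : dynsys t T)
  (x y : X) :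
  (exists u : filt S, in_K_Oplus u /\ idempotent u /\ Tp_is t T u x y) <->
  (unif_recurrent_near_zero t T y /\ proximal_near_zero t T x y).
Proof. exact (@main S X t T HT HS x y). Qed.
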